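(* Let $\Xi\subset\mathbb{F}^2$ be a finite set of distinct points, $\prec$ any term order on $\mathbb{F}[x,y]$, and $\Xi'\subset\Xi$ an $\mathcal{A}'$-cartesian subset for a lower set $\mathcal{A}'$. Then $\mathcal{A}'=\mathrm{N}_\prec(\Xi')\subset\mathrm{N}_\prec(\Xi)$; equivalently, $\{x^iy^j:(i,j)\in\mathcal{A}'\}$ equals the Gröbner escalier of $\mathcal{I}(\Xi')$ w.r.t. $\prec$ and is contained in the Gröbner escalier of $\mathcal{I}(\Xi)$ w.r.t. $\prec$.
   Context: $\mathbb{F}$ is a field. A finite set $\mathcal{A}\subset\mathbb{N}_0^2$ is a lower set if with each $(\alpha_1,\alpha_2)$ it contains all $(\alpha_1',\alpha_2')\in\mathbb{N}_0^2$ with $\alpha_1'\le\alpha_1,\alpha_2'\le\alpha_2$. A finite set $\Xi'$ of distinct points is $\mathcal{A}$-cartesian if $\Xi'=\{(x_i,y_j):(i,j)\in\mathcal{A}\}$ with pairwise distinct $x_i$ and pairwise distinct $y_j$. For a finite point set $\Xi$, $\mathcal{I}(\Xi)\subset\mathbb{F}[x,y]$ is the ideal of polynomials vanishing on $\Xi$; its Gröbner escalier w.r.t. $\prec$ is the set of monomials not divisible by the leading monomial (w.r.t. $\prec$) of any nonzero element of $\mathcal{I}(\Xi)$, and $\mathrm{N}_\prec(\Xi)=\{(i,j)\in\mathbb{N}_0^2: x^iy^j \text{ is in this escalier}\}$. *)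

(* Defs.v *)
(* Bivariate polynomials F[x,y] are encoded as {poly {poly F}}:
   the outer variable is y, the inner one is x, so the coefficient of
   x^i y^j in p is (p`_j)`_i. *)
From HB Require Import structures.
From mathcomp Require Import all_boot all_order all_algebra.
Set Implicit Arguments. Unset Strict Implicit. Unset Printing Implicit Defensive.
Import GRing.Theory.
Local Open Scope ring_scope.

Definition coef2 (F : fieldType) (p : {poly {poly F}}) (m : nat * nat) : F :=
  (p`_(m.2))`_(m.1).

Definition eval2 (F : fieldType) (p : {poly {poly F}}) (pt : F * F) : F :=
  (p.[(pt.2)%:P]).[pt.1].

Definition term_order (le : nat * nat -> nat * nat -> Prop) : Prop :=
  (forall a, le a a) /\
  [/\ (forall a b, le a b -> le b a -> a = b),
      (forall a b c, le a b -> le b c -> le a c),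
      (forall a b, le a b \/ le b a),
      (forall a b c, le a b -> le (a.1 + c.1, a.2 + c.2)%N (b.1 + c.1, b.2 + c.2)%N)
    & (forall a, le (0, 0)%N a)].

Definition is_lead_exp (F : fieldType) (le : nat * nat -> nat * nat -> Prop)
  (p : {poly {poly F}}) (m : nat * nat) : Prop :=
  coef2 p m != 0 /\ forall m', coef2 p m' != 0 -> le m' m.

Definition vanishes_on (F : fieldType) (Xi : seq (F * F)) (p : {poly {poly F}}) : Prop :=
  forall pt, pt \in Xi -> eval2 p pt = 0.

Definition in_escalier (F : fieldType) (le : nat * nat -> nat * nat -> Prop)
  (Xi : seq (F * F)) (a : nat * nat) : Prop :=
  ~ exists p : {poly {poly F}}, exists m : nat * nat,
      [/\ p != 0, vanishes_on Xi p, is_lead_exp le p m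
        & (m.1 <= a.1)%N /\ (m.2 <= a.2)%N].

Definition lower_set (A : seq (nat * nat)) : Prop :=
  forall a b, a \in A -> (b.1 <= a.1)%N -> (b.2 <= a.2)%N -> b \in A.

Definition cartesian (F : fieldType) (A : seq (nat * nat)) (Xi' : seq (F * F)) : Prop :=
  exists (xs ys : nat -> F),
    [/\ (forall a b, a \in A -> b \in A -> xs a.1 = xs b.1 -> a.1 = b.1),
        (forall a b, a \in A -> b \in A -> ys a.2 = ys b.2 -> a.2 = b.2)
      & (forall pt, pt \in Xi' <-> exists2 a, a \in A & pt = (xs a.1, ys a.2))].

(* Main.v *)
Require Import Defs.
From HB Require Import structures.
From mathcomp Require Import all_boot all_order all_algebra.

Set Implicit Arguments. Unset Strict Implicit.
Section Helpers.
Variable F : fieldType.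
Import GRing.Theory.
Local Open Scope ring_scope.

Definition XP (s : seq F) : {poly F} := \prod_(z <- s) ('X - z%:P).

Lemma le_comp le : term_order le -> forall k l i j : nat,
  (k <= i)%N -> (l <= j)%N -> le (k,l) (i,j).
Proof.
move=> [_ [_ _ _ Hm H0]] k l i j ki lj.
have := Hm (0,0)%N (i-k, j-l)%N (k,l) (H0 _) => /=.
by rewrite !add0n !subnK.
Qed.

Lemma lead_zero le (p : {poly {poly F}}) (i j k l : nat) : term_order le ->
  is_lead_exp le p (i,j) ->
  (i <= k)%N -> (j <= l)%N -> (k,l) != (i,j) -> coef2 p (k,l) = 0.
Proof.
move=> Ht [_ Hl] ik jl ne; apply/eqP; apply/negPn/negP => nz.
have h1 := Hl _ nz. have h2 := le_comp Ht ik jl.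
case: Ht => _ [Ha _ _ _ _]. by rewrite (Ha _ _ h1 h2) eqxx in ne.
Qed.

Definition phi (W : {poly F}) (i : nat) (f : {poly F}) := (f %% W)`_i.

Lemma phi_small (W f : {poly F}) i : size W = i.+2 ->
  (forall k, (i < k)%N -> f`_k = 0) -> phi W i f = f`_i.
Proof.
move=> sW hf; rewrite /phi modp_small // sW ltnS.
by apply/leq_sizeP.
Qed.

Lemma phiD (W f g : {poly F}) i : phi W i (f + g) = phi W i f + phi W i g.
Proof. by rewrite /phi modpD coefD. Qed.
Lemma phiZ (W f : {poly F}) i c : phi W i (c *: f) = c * phi W i f.
Proof. by rewrite /phi modpZl coefZ. Qed.
Lemma phi0 (W : {poly F}) i : phi W i 0 = 0.
Proof. by rewrite /phi mod0p coef0. Qed.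
Lemma phi_dvd (W f : {poly F}) i : W %| f -> phi W i f = 0.
Proof. by rewrite /phi => /modp_eq0 ->; rewrite coef0. Qed.

Lemma XP_dvd (s : seq F) (f : {poly F}) : uniq s -> all (root f) s -> XP s %| f.
Proof. by move=> us rs; apply: uniq_roots_dvdp => //; rewrite uniq_rootsE. Qed.

Lemma size_XP s : size (XP s) = (size s).+1.
Proof. by rewrite /XP size_prod_XsubC. Qed.

Lemma no_vanish le (xs ys : nat -> F) (p : {poly {poly F}}) (i j : nat) :
  term_order le -> uniq [seq xs k | k <- iota 0 i.+1] ->
  uniq [seq ys l | l <- iota 0 j.+1] ->
  (forall k l, (k <= i)%N -> (l <= j)%N -> eval2 p (xs k, ys l) = 0) ->
  is_lead_exp le p (i,j) -> False.
Proof.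
move=> Ht ux uy hv lead; have [nz hl] := lead.
set Wx := XP [seq xs k | k <- iota 0 i.+1].
set Wy := XP [seq ys l | l <- iota 0 j.+1].
have sWx : size Wx = i.+2 by rewrite /Wx size_XP size_map size_iota.
have sWy : size Wy = j.+2 by rewrite /Wy size_XP size_map size_iota.
pose q := \poly_(l < size p) phi Wx i p`_l.
have qE l : q`_l = phi Wx i p`_l.
  rewrite coef_poly; case: ltnP => // hl'; by rewrite nth_default // phi0.
have hB : phi Wy j q = coef2 p (i,j).
  rewrite phi_small //.
    rewrite qE phi_small // => k ik.
    apply: (lead_zero Ht lead) => //; first exact: ltnW.
    by rewrite xpair_eqE eqxx andbT gtn_eqF.
  move=> l jl; rewrite qE phi_small // => [|k ik].
    apply: (lead_zero Ht lead) => //; first exact: ltnW.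
    by rewrite xpair_eqE eqxx /= gtn_eqF.
  apply: (lead_zero Ht lead); [exact: ltnW|exact: ltnW|].
  by rewrite xpair_eqE gtn_eqF.
have hA : phi Wy j q = 0.
  apply: phi_dvd; apply: XP_dvd => //; apply/allP => _ /mapP [l hl' ->].
  rewrite mem_iota add0n ltnS /= in hl'.
  rewrite /root.
  have -> : q.[ys l] = phi Wx i (p.[(ys l)%:P]).
    rewrite horner_poly horner_coef.
    rewrite (big_morph (phi Wx i) (fun f g => phiD Wx f g i) (phi0 Wx i)).
    apply: eq_bigr => m _.
    by rewrite -rmorphXn [p`_m * _]mulrC mul_polyC phiZ mulrC.
  apply/eqP; apply: phi_dvd; apply: XP_dvd => //; apply/allP => _ /mapP [k hk ->].
  rewrite mem_iota add0n ltnS /= in hk.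
  by apply/eqP; exact: hv.
by move: nz; rewrite -hB hA eqxx.
Qed.

Lemma corner_poly le (xs ys : nat -> F) (i j : nat) : term_order le ->
  exists p : {poly {poly F}}, [/\ p != 0, is_lead_exp le p (i,j) &
     forall k l, ((k < i) || (l < j))%N -> eval2 p (xs k, ys l) = 0].
Proof.
move=> Ht.
set Px := XP [seq xs k | k <- iota 0 i].
set Q := XP [seq ys l | l <- iota 0 j].
exists (Px%:P * map_poly polyC Q).
have cE k l : coef2 (Px%:P * map_poly polyC Q) (k,l) = Px`_k * Q`_l.
  by rewrite /coef2 /= coefCM coef_map /= coefMC.
have sPx : size Px = i.+1 by rewrite /Px size_XP size_map size_iota.
have sQ : size Q = j.+1 by rewrite /Q size_XP size_map size_iota.
have mPx : Px`_i = 1.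
  have := monic_prod_XsubC [seq xs k | k <- iota 0 i] (fun _ => true) id.
  by rewrite -/(XP _) -/Px monicE lead_coefE sPx => /eqP.
have mQ : Q`_j = 1.
  have := monic_prod_XsubC [seq ys k | k <- iota 0 j] (fun _ => true) id.
  by rewrite -/(XP _) -/Q monicE lead_coefE sQ => /eqP.
have lead : is_lead_exp le (Px%:P * map_poly polyC Q) (i,j).
  split; first by rewrite cE mPx mQ mulr1 oner_neq0.
  case=> k l; rewrite cE => nz; apply: (le_comp Ht).
    case: (leqP k i) => // h.
    have h0 : Px`_k = 0 by rewrite nth_default ?sPx.
    by rewrite h0 mul0r eqxx in nz.
  case: (leqP l j) => // h.
  have h0 : Q`_l = 0 by rewrite nth_default ?sQ.
  by rewrite h0 mulr0 eqxx in nz.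
split => //.
  have [nz _] := lead; apply: contraNneq nz => ->.
  by rewrite /coef2 !coef0.
move=> k l hkl; rewrite /eval2 /= hornerM hornerC.
rewrite -[(ys l)%:P]/(polyC (ys l)) horner_map /= hornerM hornerC.
case/orP: hkl => h.
  suff -> : Px.[xs k] = 0 by rewrite mul0r.
  apply/eqP; rewrite -/(root Px (xs k)) root_prod_XsubC.
  by apply: map_f; rewrite mem_iota add0n.
suff -> : Q.[ys l] = 0 by rewrite mulr0.
apply/eqP; rewrite -/(root Q (ys l)) root_prod_XsubC.
by apply: map_f; rewrite mem_iota add0n.
Qed.

End Helpers.

Theorem mainTheorem6 (F : fieldType) (le : nat * nat -> nat * nat -> Prop)
  (Xi Xi' : seq (F * F)) (A : seq (nat * nat)) :
  term_order le ->
  {subset Xi' <= Xi} ->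
  lower_set A ->
  cartesian A Xi' ->
  forall a : nat * nat,
    (a \in A <-> in_escalier le Xi' a) /\
    (in_escalier le Xi' a -> in_escalier le Xi a).
Proof.
move=> Ht sub low [xs [ys [hx hy hpt]]] a.
have part2 : in_escalier le Xi' a -> in_escalier le Xi a.
  move=> h [p [m [nz van lead dv]]]; apply: h; exists p, m; split => //.
  by move=> pt /sub; exact: van.
split => //; split.
- move=> aA [p [m [nz van [cnz hl] [m1 m2]]]].
  have mA : m \in A := low a m aA m1 m2.
  case: m mA cnz hl {m1 m2} => i j mA cnz hl.
  apply: (@no_vanish F le xs ys p i j Ht).
  + rewrite map_inj_in_uniq ?iota_uniq // => k k'.
    rewrite !mem_iota !add0n !ltnS /= => hk hk' e.
    have h1 : (k,0)%N \in A by apply: (low _ _ mA).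
    have h2 : (k',0)%N \in A by apply: (low _ _ mA).
    exact: (hx _ _ h1 h2 e).
  + rewrite map_inj_in_uniq ?iota_uniq // => k k'.
    rewrite !mem_iota !add0n !ltnS /= => hk hk' e.
    have h1 : (0,k)%N \in A by apply: (low _ _ mA).
    have h2 : (0,k')%N \in A by apply: (low _ _ mA).
    exact: (hy _ _ h1 h2 e).
  + move=> k l ki lj; apply: van; apply/hpt; exists (k,l) => //.
    by apply: (low (i,j)) => /=.
  + by split.
- move=> hesc; case: (boolP (a \in A)) => // aA; exfalso; apply: hesc.
  clear part2; case: a aA => i j aA.
  have [p [nz lead hv]] := corner_poly xs ys i j Ht.
  exists p, (i,j); split => //.
  move=> pt /hpt [[k l] kA ->]; apply: hv.
  case: (ltnP k i) => //= ik; case: (ltnP l j) => //= jl.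
  by rewrite (low _ (i,j) kA ik jl) in aA.
Qed.
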